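(* Let $T>0$. Let $g\in C^1(\mathbb{R})$ be an odd function with $\sup_{x\in\mathbb{R}}|g'(x)|<2/T^2$, and let $k:\mathbb{R}\to\mathbb{R}$ be a continuous, odd, $T$-periodic function with $\frac{1}{T}\int_0^T k(t)\,dt=0$. Then the equation $$u''+g(u)=k(t)$$ has exactly one solution $u\in C^2(\mathbb{R})$ that is odd and $T$-periodic.
   Context: A function $h$ is odd if $h(-x)=-h(x)$ for all $x$. *)

(* Defs.v *)
From Stdlib Require Import Reals.
From Coquelicot Require Import Coquelicot.
Open Scope R_scope.

Definition odd_fun (h : R -> R) : Prop := forall x, h (- x) = - h x.

Definition periodic (T : R) (h : R -> R) : Prop := forall x, h (x + T) = h x.

Definition is_C1 (h : R -> R) : Prop :=
  (forall x, ex_derive h x) /\ (forall x, continuous (Derive h) x).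

Definition is_C2 (h : R -> R) : Prop :=
  (forall x, ex_derive h x) /\ (forall x, ex_derive (Derive h) x) /\
  (forall x, continuous (Derive_n h 2) x).

(* Main.v *)
Require Import Defs.
From Stdlib Require Import Reals Lra Lia ZArith Psatz FunctionalExtensionality.
From Coquelicot Require Import Coquelicot.
Open Scope R_scope.

Lemma cont_of_derive f x l : is_derive f x l -> continuity_pt f x.
Proof. intro H. apply continuity_pt_filterlim. apply (ex_derive_continuous f x). exists l; exact H. Qed.

Lemma MVT' (f df : R -> R) a b : a <= b -> (forall x, is_derive f x (df x)) ->
  exists c, a <= c <= b /\ f b - f a = df c * (b - a).
Proof.
  intros Hab Hd. destruct (MVT_gen f a b df) as [c [Hc E]].
  - intros; apply Hd.
  - intros; eapply cont_of_derive; apply Hd.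
  - exists c. rewrite Rmin_left in Hc by lra. rewrite Rmax_right in Hc by lra. split; auto.
Qed.

Lemma const_of_d0 (f : R -> R) : (forall x, is_derive f x 0) -> forall x y, f x = f y.
Proof.
  intros H x y. destruct (Rle_dec x y).
  - destruct (MVT' f (fun _ => 0) x y r H) as [c [_ E]]. lra.
  - destruct (MVT' f (fun _ => 0) y x ltac:(lra) H) as [c [_ E]]. lra.
Qed.

Lemma is_derive_eq (f : R -> R) (x l l' : R) : is_derive f x l -> l = l' -> is_derive f x l'.
Proof. intros H ->; exact H. Qed.

Definition prim (f : R -> R) (t : R) := RInt f 0 t.
Definition SS (T : R) (f : R -> R) (t : R) := RInt (prim f) 0 t - t * (RInt (prim f) 0 T / T).
Definition CC (T : R) f := RInt (prim f) 0 T / T.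

Lemma prim_deriv f : (forall t, continuous f t) -> forall t, is_derive (prim f) t (f t).
Proof.
  intros Hc t. apply is_derive_RInt with (a := 0); [|apply Hc].
  apply filter_forall. intro b. apply RInt_correct, ex_RInt_continuous. intros; apply Hc.
Qed.

Lemma prim_cont f : (forall t, continuous f t) -> forall t, continuous (prim f) t.
Proof. intros Hc t. apply (ex_derive_continuous (prim f) t). exists (f t). now apply prim_deriv. Qed.

Lemma cst_deriv (c x : R) : is_derive (fun _ => c) x 0.
Proof. auto_derive; auto. Qed.

Lemma lin_deriv C x : is_derive (fun t => t * C) x C.
Proof. auto_derive; try exact I; field. Qed.

Lemma S_deriv T f : (forall t, continuous f t) -> forall t, is_derive (SS T f) t (prim f t - CC T f).
Proof.
  intros Hc t. unfold SS, CC.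
  apply (is_derive_minus (fun t => RInt (prim f) 0 t) (fun t => t * (RInt (prim f) 0 T / T))).
  - apply (prim_deriv (prim f)). apply prim_cont, Hc.
  - apply lin_deriv.
Qed.

Lemma S_deriv2 T f : (forall t, continuous f t) -> forall t, is_derive (fun t => prim f t - CC T f) t (f t).
Proof.
  intros Hc t. apply is_derive_eq with (minus (f t) 0).
  - apply (is_derive_minus (prim f) (fun _ => CC T f)). now apply prim_deriv. apply cst_deriv.
  - unfold minus, plus, opp; simpl; field.
Qed.
Lemma maxprin (p p1 p2 : R -> R) T : 0 < T ->
  (forall x, is_derive p x (p1 x)) -> (forall x, is_derive p1 x (p2 x)) ->
  (forall x, 0 <= x <= T -> 0 <= p2 x) -> p 0 <= 0 -> p T <= 0 ->
  forall t, 0 <= t <= T -> p t <= 0.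
Proof.
  intros HT H1 H2 Hp H0 HT0 t Ht.
  destruct (Rle_dec (p t) 0) as [|Hn]; auto. exfalso.
  assert (0 < t < T) by (destruct (Req_dec t 0); [subst; lra|]; destruct (Req_dec t T); [subst; lra| lra]).
  destruct (MVT' p p1 0 t ltac:(lra) H1) as [x1 [Hx1 E1]].
  destruct (MVT' p p1 t T ltac:(lra) H1) as [x2 [Hx2 E2]].
  assert (A1 : p1 x1 > 0) by nra. assert (A2 : p1 x2 < 0) by nra.
  destruct (MVT' p1 p2 x1 x2 ltac:(lra) H2) as [x3 [Hx3 E3]].
  assert (0 <= p2 x3) by (apply Hp; lra). nra.
Qed.

Lemma S0 T f : SS T f 0 = 0.
Proof. unfold SS. rewrite RInt_point. unfold zero; simpl; ring. Qed.

Lemma ST T f : 0 < T -> SS T f T = 0.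
Proof. intro. unfold SS. field. lra. Qed.

Lemma deriv_comb (s M T : R) (A B : R -> R) (a b x : R) : is_derive A x a -> is_derive B x b ->
  is_derive (fun t => s*(A t - B t) - M*t*(T-t)/2) x (s*(a-b) - M*(T-2*x)/2).
Proof.
  intros HA HB.
  apply is_derive_eq with (minus (s * minus a b) (M*(T-2*x)/2)).
  - apply (is_derive_minus (fun t => s * (A t - B t)) (fun t => M*t*(T-t)/2)).
    + apply is_derive_scal. apply (is_derive_minus A B); auto.
    + auto_derive; try exact I; field.
  - unfold minus, plus, opp; simpl; field.
Qed.

Lemma S_bound T f h M : 0 < T -> (forall t, continuous f t) -> (forall t, continuous h t) ->
  (forall x, 0 <= x <= T -> Rabs (f x - h x) <= M) ->
  forall t, 0 <= t <= T -> Rabs (SS T f t - SS T h t) <= M * T^2/8.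
Proof.
  intros HT Hf Hh HM t Ht.
  assert (M0 : 0 <= M) by (specialize (HM 0 ltac:(lra)); pose proof (Rabs_pos (f 0 - h 0)); lra).
  assert (Hq : t*(T-t) <= T^2/4) by (pose proof (pow2_ge_0 (T - 2*t)); simpl in *; nra).
  assert (G : forall s, (s = 1 \/ s = -1) -> s * (SS T f t - SS T h t) - M*t*(T-t)/2 <= 0).
  { intros s Hs.
    apply (maxprin (fun t => s*(SS T f t - SS T h t) - M*t*(T-t)/2)
             (fun t => s*((prim f t - CC T f) - (prim h t - CC T h)) - M*(T-2*t)/2)
             (fun t => s*(f t - h t) + M) T HT); auto.
    - intro x. apply deriv_comb; apply S_deriv; auto.
    - intro x. apply is_derive_eq with (s*(f x - h x) - M*(0-2*1)/2).
      + apply is_derive_minus with (f := fun t => s*((prim f t - CC T f) - (prim h t - CC T h)))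
          (g := fun t => M*(T-2*t)/2).
        * apply is_derive_scal. apply (is_derive_minus (fun t => prim f t - CC T f) (fun t => prim h t - CC T h));
          apply S_deriv2; auto.
        * auto_derive; try exact I; field.
      + unfold minus, plus, opp; simpl; field.
    - intros x Hx. specialize (HM x Hx). destruct Hs as [-> | ->];
        apply Rabs_le_between in HM; lra.
    - rewrite !S0. lra.
    - rewrite !ST by auto. nra. }
  pose proof (G 1 (or_introl eq_refl)). pose proof (G (-1) (or_intror eq_refl)).
  apply Rabs_le. split; nra.
Qed.
Lemma deriv_sub (f g : R -> R) (a b x : R) : is_derive f x a -> is_derive g x b ->
  is_derive (fun t => f t - g t) x (a - b).
Proof. intros. apply (is_derive_minus f g); auto. Qed.

Lemma deriv_add (f g : R -> R) (a b x : R) : is_derive f x a -> is_derive g x b ->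
  is_derive (fun t => f t + g t) x (a + b).
Proof. intros. apply (is_derive_plus f g); auto. Qed.

Lemma deriv_opp_arg (f : R -> R) (l x : R) : is_derive f (-x) l -> is_derive (fun t => f (-t)) x (-l).
Proof.
  intro H. apply is_derive_eq with (scal (-1) l).
  - apply (is_derive_comp f Ropp x l (-1)); auto. auto_derive; auto.
  - unfold scal; simpl; unfold mult; simpl; ring.
Qed.

Lemma deriv_shift (f : R -> R) (l x T : R) : is_derive f (x+T) l -> is_derive (fun t => f (t+T)) x l.
Proof.
  intro H. apply is_derive_eq with (scal 1 l).
  - apply (is_derive_comp f (fun t => t + T) x l 1); auto. auto_derive; auto.
  - unfold scal; simpl; unfold mult; simpl; ring.
Qed.


Lemma S_preserve T h : 0 < T -> (forall t, continuous h t) -> odd_fun h -> periodic T h ->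
  odd_fun (SS T h) /\ periodic T (SS T h).
Proof.
  intros HT Hc Ho Hp.
  set (P := prim h). set (C := CC T h).
  assert (HP : forall t, is_derive P t (h t)) by (apply prim_deriv; auto).
  assert (P0 : P 0 = 0) by (unfold P, prim; rewrite RInt_point; reflexivity).
  assert (Pev : forall t, P (-t) = P t).
  { intro t. assert (E := const_of_d0 (fun t => P (-t) - P t)).
    specialize (E ltac:(intro x; apply is_derive_eq with (- h (-x) - h x);
       [apply deriv_sub; [apply deriv_opp_arg, HP | apply HP] | rewrite Ho; ring]) t 0).
    simpl in E. rewrite Ropp_0 in E. lra. }
  assert (Pper : forall t, P (t+T) - P t = P T).
  { intro t. assert (E := const_of_d0 (fun t => P (t+T) - P t)).
    specialize (E ltac:(intro x; apply is_derive_eq with (h (x+T) - h x);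
       [apply deriv_sub; [apply deriv_shift, HP | apply HP] | rewrite Hp; ring]) t 0).
    simpl in E. rewrite Rplus_0_l in E. lra. }
  assert (PT : P T = 0).
  { pose proof (Pper (-(T/2))). rewrite Pev in H.
    replace (-(T/2) + T) with (T/2) in H by field. lra. }
  assert (HS : forall t, is_derive (SS T h) t (P t - C)) by (apply S_deriv; auto).
  split.
  - intro t. assert (E := const_of_d0 (fun t => SS T h (-t) + SS T h t)).
    specialize (E ltac:(intro x; apply is_derive_eq with (-(P (-x) - C) + (P x - C));
       [apply deriv_add; [apply deriv_opp_arg, HS | apply HS] | rewrite Pev; ring]) t 0).
    simpl in E. rewrite Ropp_0, S0 in E. lra.
  - intro t. assert (E := const_of_d0 (fun t => SS T h (t+T) - SS T h t)).
    specialize (E ltac:(intro x; apply is_derive_eq with ((P (x+T) - C) - (P x - C));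
       [apply deriv_sub; [apply deriv_shift, HS | apply HS] | pose proof (Pper x); lra]) t 0).
    simpl in E. rewrite Rplus_0_l, S0, ST in E by auto. lra.
Qed.
Lemma repr T (w f : R -> R) : 0 < T -> (forall x, is_derive w x (Derive w x)) ->
  (forall x, is_derive (Derive w) x (f x)) -> (forall t, continuous f t) ->
  odd_fun w -> periodic T w -> forall t, w t = SS T f t.
Proof.
  intros HT Hw Hw2 Hc Ho Hp t.
  set (d1 := fun t => Derive w t - (prim f t - CC T f)).
  assert (Hd : forall x, is_derive (fun t => w t - SS T f t) x (d1 x)).
  { intro x. apply deriv_sub; auto. apply S_deriv; auto. }
  assert (Hd1 : forall x, d1 x = d1 0).
  { intro x. apply const_of_d0. intro y. apply is_derive_eq with (f y - f y).
    apply deriv_sub; auto. apply S_deriv2; auto. ring. }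
  set (a := d1 0).
  assert (He : forall x y, (w x - SS T f x - a * x) = (w y - SS T f y - a * y)).
  { apply const_of_d0. intro y. apply is_derive_eq with (d1 y - a * 1).
    apply deriv_sub; auto. apply is_derive_scal. auto_derive; auto. rewrite Hd1. unfold a. ring. }
  assert (w0 : w 0 = 0) by (pose proof (Ho 0); rewrite Ropp_0 in H; lra).
  assert (wT : w T = 0) by (pose proof (Hp 0); rewrite Rplus_0_l in H; lra).
  pose proof (He T 0) as E1. rewrite S0, ST, w0, wT in E1 by auto.
  assert (a = 0) by nra.
  pose proof (He t 0) as E2. rewrite S0, w0 in E2. rewrite H in E2. lra.
Qed.

Lemma per_nat T h : periodic T h -> forall n x, h (x + INR n * T) = h x.
Proof.
  intros Hp n. induction n; intro x. simpl. f_equal; ring.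
  rewrite S_INR. replace (x + (INR n + 1) * T) with ((x + INR n * T) + T) by ring.
  rewrite Hp. auto.
Qed.

Lemma per_reduce T h : 0 < T -> periodic T h -> forall t, exists t', 0 <= t' <= T /\ h t = h t'.
Proof.
  intros HT Hp t. destruct (archimed (t / T)) as [A1 A2].
  set (m := (up (t/T) - 1)%Z).
  assert (Hm : IZR m = IZR (up (t/T)) - 1) by (unfold m; rewrite minus_IZR; reflexivity).
  exists (t - IZR m * T). split.
  - assert (IZR m <= t/T /\ t/T < IZR m + 1) by lra.
    split.
    + assert (IZR m * T <= t/T * T) by (apply Rmult_le_compat_r; lra).
      replace (t/T*T) with t in H0 by (field; lra). lra.
    + assert (t/T * T < (IZR m + 1) * T) by (apply Rmult_lt_compat_r; lra).
      replace (t/T*T) with t in H0 by (field; lra). lra.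
  - destruct (Z_le_gt_dec 0 m) as [Hz|Hz].
    + rewrite <- (Z2Nat.id m Hz), <- INR_IZR_INZ.
      rewrite <- (per_nat T h Hp (Z.to_nat m) (t - INR (Z.to_nat m) * T)). f_equal; ring.
    + assert (Hz' : (0 <= - m)%Z) by lia.
      replace (IZR m) with (- IZR (- m)) by (rewrite opp_IZR; ring).
      rewrite <- (Z2Nat.id (-m) Hz'), <- INR_IZR_INZ.
      rewrite <- (per_nat T h Hp (Z.to_nat (-m)) t). f_equal; ring.
Qed.
Lemma cont_sub (f g : R -> R) (x : R) : continuous f x -> continuous g x -> continuous (fun t => f t - g t) x.
Proof. intros. apply (continuous_minus f g x); auto. Qed.

Lemma cont_comp (f g : R -> R) (x : R) : continuous f x -> continuous g (f x) -> continuous (fun t => g (f t)) x.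
Proof. intros. apply (continuous_comp f g x); auto. Qed.

Lemma bnd T (u : R -> R) : 0 <= T -> (forall t, continuous u t) ->
  exists B, forall t, 0 <= t <= T -> Rabs (u t) <= B.
Proof.
  intros HT Hc. destruct (continuity_ab_maj (fun x => Rabs (u x)) 0 T HT) as [Mx [H1 H2]].
  - intros c _. apply continuity_pt_filterlim. apply continuous_Rabs_comp. apply Hc.
  - exists (Rabs (u Mx)). auto.
Qed.

Lemma glip (g : R -> R) c : (forall x, ex_derive g x) -> (forall x, Rabs (Derive g x) <= c) ->
  forall a b, Rabs (g a - g b) <= c * Rabs (a - b).
Proof.
  intros Hd Hc.
  assert (K : forall a b, a <= b -> Rabs (g a - g b) <= c * Rabs (a - b)).
  { intros a b Hab. destruct (MVT' g (Derive g) a b Hab) as [x [_ E]].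
    intro y; apply Derive_correct, Hd.
    rewrite <- Rabs_Ropp, Ropp_minus_distr, E, Rabs_mult, <- (Rabs_Ropp (a - b)), Ropp_minus_distr.
    apply Rmult_le_compat_r; [apply Rabs_pos | apply Hc]. }
  intros a b. destruct (Rle_dec a b). auto.
  rewrite <- Rabs_Ropp, Ropp_minus_distr, <- (Rabs_Ropp (a - b)), Ropp_minus_distr. apply K; lra.
Qed.

Lemma S_cont T h : (forall t, continuous h t) -> forall t, continuous (SS T h) t.
Proof. intros Hc t. apply (ex_derive_continuous (SS T h) t). eexists. apply S_deriv; auto. Qed.

Lemma S_bound_R T h1 h2 M : 0 < T -> (forall t, continuous h1 t) -> (forall t, continuous h2 t) ->
  odd_fun h1 -> periodic T h1 -> odd_fun h2 -> periodic T h2 ->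
  (forall x, 0 <= x <= T -> Rabs (h1 x - h2 x) <= M) ->
  forall t, Rabs (SS T h1 t - SS T h2 t) <= M * T^2/8.
Proof.
  intros HT c1 c2 o1 p1 o2 p2 HM t.
  destruct (S_preserve T h1 HT c1 o1 p1) as [_ q1].
  destruct (S_preserve T h2 HT c2 o2 p2) as [_ q2].
  destruct (per_reduce T (fun t => SS T h1 t - SS T h2 t) HT) with (t := t) as [t' [Ht' E]].
  { intro x. simpl. rewrite q1, q2. auto. }
  simpl in E. rewrite E. apply S_bound; auto.
Qed.

Lemma small_zero q K x : 0 <= q < 1 -> (forall n, Rabs x <= q ^ n * K) -> x = 0.
Proof.
  intros Hq H. destruct (Req_dec x 0); auto. exfalso.
  assert (Hx : 0 < Rabs x) by (apply Rabs_pos_lt; auto).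
  assert (HK : 0 < K) by (specialize (H 0%nat); simpl in H; lra).
  destruct (pow_lt_1_zero q ltac:(rewrite Rabs_pos_eq; lra) (Rabs x / K) ltac:(apply Rdiv_lt_0_compat; auto)) as [N HN].
  specialize (HN N (le_n _)). specialize (H N). rewrite Rabs_pos_eq in HN by (apply pow_le; lra).
  apply (Rmult_lt_compat_r K) in HN; auto. replace (Rabs x / K * K) with (Rabs x) in HN by (field; lra). lra.
Qed.

Lemma lim_bound (x : nat -> R) (l a K : R) (n : nat) : is_lim_seq x l ->
  (forall m, (n <= m)%nat -> Rabs (x m - a) <= K) -> Rabs (l - a) <= K.
Proof.
  intros Hl Hb.
  assert (H := is_lim_seq_le_loc (fun m => Rabs (x m - a)) (fun _ => K) (Rabs (l - a)) K).
  simpl in H. apply H.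
  - exists n. auto.
  - apply (is_lim_seq_abs (fun m => x m - a) (l - a)). apply is_lim_seq_minus'; auto. apply is_lim_seq_const.
  - apply is_lim_seq_const.
Qed.
Definition FF T (k g : R -> R) (u : R -> R) := SS T (fun t => k t - g (u t)).
Fixpoint it T k g (n : nat) : R -> R :=
  match n with O => SS T (fun _ => 0) | S n => FF T k g (it T k g n) end.
Definition QQ T (u : R -> R) := (forall t, continuous u t) /\ odd_fun u /\ periodic T u.

Lemma FF_Q (T : R) (k g u : R -> R) : 0 < T -> (forall x, ex_derive g x) -> odd_fun g ->
  (forall t, continuous k t) -> odd_fun k -> periodic T k -> QQ T u -> QQ T (FF T k g u).
Proof.
  intros HT Hg go Hk ko kp [uc [uo up]].
  assert (hc : forall t, continuous (fun t => k t - g (u t)) t).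
  { intro t. apply cont_sub; auto. apply cont_comp; auto. apply (ex_derive_continuous g), Hg. }
  assert (ho : odd_fun (fun t => k t - g (u t))).
  { intro t. rewrite ko, uo, go. ring. }
  assert (hp : periodic T (fun t => k t - g (u t))).
  { intro t. rewrite kp, up. ring. }
  destruct (S_preserve T _ HT hc ho hp). split; [|split]; auto. apply S_cont; auto.
Qed.

Lemma FF_diff (T : R) (k g : R -> R) (c : R) (u v : R -> R) (D : R) : 0 < T -> (forall x, ex_derive g x) -> odd_fun g ->
  (forall x, Rabs (Derive g x) <= c) ->
  (forall t, continuous k t) -> odd_fun k -> periodic T k -> QQ T u -> QQ T v ->
  (forall t, Rabs (u t - v t) <= D) -> forall t, Rabs (FF T k g u t - FF T k g v t) <= (c * T^2/8) * D.
Proof.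
  intros HT Hg go Hc Hk ko kp Qu Qv HD t.
  assert (c0 : 0 <= c) by (pose proof (Hc 0); pose proof (Rabs_pos (Derive g 0)); lra).
  assert (hc : forall w, QQ T w -> forall t, continuous (fun t => k t - g (w t)) t).
  { intros w [wc _] t'. apply cont_sub; auto. apply cont_comp; auto. apply (ex_derive_continuous g), Hg. }
  assert (ho : forall w, QQ T w -> odd_fun (fun t => k t - g (w t))).
  { intros w [_ [wo _]] t'. rewrite ko, wo, go. ring. }
  assert (hp : forall w, QQ T w -> periodic T (fun t => k t - g (w t))).
  { intros w [_ [_ wp]] t'. rewrite kp, wp. ring. }
  replace (c * T^2/8 * D) with ((c * D) * T^2/8) by field.
  unfold FF. apply S_bound_R; auto.
  intros x _. replace (k x - g (u x) - (k x - g (v x))) with (g (v x) - g (u x)) by ring.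
  eapply Rle_trans. apply (glip g c Hg Hc).
  rewrite <- Rabs_Ropp, Ropp_minus_distr. apply Rmult_le_compat_l; auto.
Qed.

Lemma S_C2 (T : R) (h : R -> R) : (forall t, continuous h t) ->
  ((forall x, ex_derive (SS T h) x) /\ (forall x, ex_derive (Derive (SS T h)) x) /\
   (forall x, continuous (Derive_n (SS T h) 2) x)) /\ forall t, Derive_n (SS T h) 2 t = h t.
Proof.
  intros Hc.
  assert (D1 : forall t, Derive (SS T h) t = prim h t - CC T h).
  { intro t. apply is_derive_unique. apply S_deriv; auto. }
  assert (D2 : forall x, is_derive (Derive (SS T h)) x (h x)).
  { intro x. apply is_derive_ext with (f := fun t => prim h t - CC T h). intro; rewrite D1; auto.
    apply S_deriv2; auto. }
  assert (D3 : forall t, Derive_n (SS T h) 2 t = h t).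
  { intro t. change (Derive (Derive (SS T h)) t = h t). apply is_derive_unique; auto. }
  split; [split; [|split]|]; auto.
  - intro x. eexists. apply S_deriv; auto.
  - intro x. eexists. apply D2.
  - intro x. apply continuous_ext with (f := h). intro; rewrite D3; auto. auto.
Qed.

Lemma small_pow (q K e : R) : 0 <= q < 1 -> 0 <= K -> 0 < e -> exists N, q ^ N * K < e.
Proof.
  intros Hq HK He.
  destruct (pow_lt_1_zero q ltac:(rewrite Rabs_pos_eq; lra) (e / (K+1)) ltac:(apply Rdiv_lt_0_compat; lra)) as [N HN].
  exists N. specialize (HN N (le_n _)). rewrite Rabs_pos_eq in HN by (apply pow_le; lra).
  assert (0 <= q ^ N) by (apply pow_le; lra).
  apply (Rmult_lt_compat_r (K+1)) in HN; [|lra]. replace (e / (K+1) * (K+1)) with e in HN by (field; lra).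
  nra.
Qed.
Theorem theorem2 (T : R) (g k : R -> R) :
  0 < T ->
  is_C1 g -> odd_fun g ->
  (exists c, c < 2 / T ^ 2 /\ forall x, Rabs (Derive g x) <= c) ->
  (forall t, continuous k t) -> odd_fun k -> periodic T k ->
  / T * RInt k 0 T = 0 ->
  exists! u : R -> R,
    is_C2 u /\ odd_fun u /\ periodic T u /\
    forall t, Derive_n u 2 t + g (u t) = k t.
Proof.
  intros HT [Hg _] go [c [Hc2 Hc]] Hk ko kp _.
  assert (c0 : 0 <= c) by (pose proof (Hc 0); pose proof (Rabs_pos (Derive g 0)); lra).
  set (q := c * T^2/8).
  assert (Hq : 0 <= q < 1).
  { unfold q. assert (0 < T^2) by (apply pow_lt; lra).
    assert (c * T^2 < 2) by (apply (Rmult_lt_compat_r (T^2)) in Hc2; auto;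
      replace (2 / T^2 * T^2) with 2 in Hc2 by (field; lra); lra).
    split. apply Rmult_le_pos; [apply Rmult_le_pos|]; lra. lra. }
  assert (Fd : forall u v D, QQ T u -> QQ T v -> (forall t, Rabs (u t - v t) <= D) ->
     forall t, Rabs (FF T k g u t - FF T k g v t) <= q * D).
  { intros. apply FF_diff; auto. }
  set (u := it T k g).
  assert (Qu : forall n, QQ T (u n)).
  { induction n.
    - assert (hc : forall t, continuous (fun _ : R => 0) t) by (intro; apply continuous_const).
      assert (ho : odd_fun (fun _ : R => 0)) by (intro; simpl; lra).
      assert (hp : periodic T (fun _ : R => 0)) by (intro; auto).
      destruct (S_preserve T _ HT hc ho hp). split; [|split]; auto. apply S_cont; auto.
    - apply FF_Q; auto. }
  (* every bound on [0,T] of a difference extends to R *)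
  assert (Ext : forall v w, QQ T v -> QQ T w -> exists D, forall t, Rabs (v t - w t) <= D).
  { intros v w [vc [_ vp]] [wc [_ wp]].
    destruct (bnd T (fun t => v t - w t) ltac:(lra)) as [D HD].
    { intro; apply cont_sub; auto. }
    exists D. intro t. destruct (per_reduce T (fun t => v t - w t) HT) with (t := t) as [t' [Ht' E]].
    { intro x; simpl; rewrite vp, wp; auto. }
    simpl in E. rewrite E. auto. }
  destruct (Ext (u 1%nat) (u 0%nat) (Qu _) (Qu _)) as [B HB].
  assert (B0 : 0 <= B) by (pose proof (HB 0); pose proof (Rabs_pos (u 1%nat 0 - u 0%nat 0)); lra).
  assert (Step : forall n t, Rabs (u (S n) t - u n t) <= q ^ n * B).
  { induction n; intro t. rewrite pow_O, Rmult_1_l; apply HB.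
    change (Rabs (FF T k g (u (S n)) t - FF T k g (u n) t) <= q ^ S n * B).
    replace (q ^ S n * B) with (q * (q ^ n * B)) by (simpl; ring).
    apply Fd; auto. }
  assert (Cum : forall n m t, Rabs (u (n + m)%nat t - u n t) <= (q ^ n - q ^ (n + m)) * B / (1 - q)).
  { intros n m t. induction m.
    - rewrite Nat.add_0_r. unfold Rminus. rewrite !Rplus_opp_r, Rabs_R0. unfold Rdiv. rewrite !Rmult_0_l. lra.
    - rewrite Nat.add_succ_r.
      replace (u (S (n + m)) t - u n t) with ((u (S (n + m)) t - u (n + m)%nat t) + (u (n + m)%nat t - u n t)) by ring.
      eapply Rle_trans. apply Rabs_triang.
      eapply Rle_trans. apply Rplus_le_compat. apply Step. apply IHm.
      right. simpl. field. lra. }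
  assert (Cum' : forall n m t, (n <= m)%nat -> Rabs (u m t - u n t) <= q ^ n * (B / (1 - q))).
  { intros n m t Hnm. replace m with (n + (m - n))%nat by lia.
    eapply Rle_trans. apply Cum. assert (0 <= q ^ (n + (m - n))) by (apply pow_le; lra).
    assert (0 <= B / (1 - q)) by (apply Rdiv_le_0_compat; lra).
    unfold Rdiv in *. assert (0 < / (1-q)) by (apply Rinv_0_lt_compat; lra). nra. }
  set (K := B / (1 - q)).
  assert (K0 : 0 <= K) by (apply Rdiv_le_0_compat; lra).
  assert (Fin : forall t, ex_finite_lim_seq (fun n => u n t)).
  { intro t. apply ex_lim_seq_cauchy_corr. intro eps.
    destruct (small_pow q (2 * K) eps Hq ltac:(lra) (cond_pos eps)) as [N HN].
    exists N. intros n m Hn Hm.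
    replace (u n t - u m t) with ((u n t - u N t) - (u m t - u N t)) by ring.
    eapply Rle_lt_trans. apply Rabs_triang. rewrite Rabs_Ropp.
    pose proof (Cum' N n t Hn). pose proof (Cum' N m t Hm). assert (q^N*(2*K) = 2*(q^N*K)) by ring. unfold K in *. lra. }
  set (U := fun t => real (Lim_seq (fun n => u n t))).
  assert (HU : forall t, is_lim_seq (fun n => u n t) (U t)).
  { intro t. destruct (Fin t) as [l Hl]. unfold U. rewrite (is_lim_seq_unique _ _ Hl). exact Hl. }
  assert (UB : forall n t, Rabs (U t - u n t) <= q ^ n * K).
  { intros n t. apply (lim_bound (fun m => u m t) (U t) (u n t) (q ^ n * K) n (HU t)).
    intros m Hm. apply Cum'; auto. }
  assert (Uo : odd_fun U).
  { intro t. assert (U (-t) + U t = 0); [|lra].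
    apply (small_zero q (2 * K)); auto. intro n.
    destruct (Qu n) as [_ [uo _]].
    replace (U (-t) + U t) with ((U (-t) - u n (-t)) + (U t - u n t)) by (rewrite uo; ring).
    eapply Rle_trans. apply Rabs_triang. pose proof (UB n (-t)). pose proof (UB n t). lra. }
  assert (Up : periodic T U).
  { intro t. assert (U (t + T) - U t = 0); [|lra].
    apply (small_zero q (2 * K)); auto. intro n.
    destruct (Qu n) as [_ [_ up]].
    replace (U (t + T) - U t) with ((U (t + T) - u n (t + T)) - (U t - u n t)) by (rewrite up; ring).
    eapply Rle_trans. apply Rabs_triang. rewrite Rabs_Ropp. pose proof (UB n (t + T)). pose proof (UB n t). lra. }
  assert (Uc : forall t, continuous U t).
  { intro x0. apply continuity_pt_filterlim.
    unfold continuity_pt, continue_in, limit1_in, limit_in. simpl. unfold R_dist.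
    intros eps Heps.
    destruct (small_pow q K (eps / 3) Hq K0 ltac:(lra)) as [N HN].
    destruct (Qu N) as [uc _].
    assert (C := proj2 (continuity_pt_filterlim (u N) x0) (uc x0)).
    unfold continuity_pt, continue_in, limit1_in, limit_in in C. simpl in C. unfold R_dist in C.
    destruct (C (eps / 3) ltac:(lra)) as [del [Hdel Hd]].
    exists del. split; auto. intros x [Dx Hx].
    specialize (Hd x (conj Dx Hx)).
    replace (U x - U x0) with ((U x - u N x) + (u N x - u N x0) - (U x0 - u N x0)) by ring.
    pose proof (UB N x). pose proof (UB N x0).
    eapply Rle_lt_trans. apply Rabs_triang. rewrite Rabs_Ropp.
    pose proof (Rabs_triang (U x - u N x) (u N x - u N x0)). lra. }
  assert (QU : QQ T U) by (split; [|split]; auto).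
  assert (Fix : forall t, FF T k g U t = U t).
  { intro t. assert (FF T k g U t - U t = 0); [|lra].
    apply (small_zero q (2 * K)); auto. intro n.
    replace (FF T k g U t - U t) with ((FF T k g U t - FF T k g (u n) t) - (U t - u (S n) t)) by (change (u (S n)) with (FF T k g (u n)); ring).
    eapply Rle_trans. apply Rabs_triang. rewrite Rabs_Ropp.
    pose proof (Fd U (u n) (q ^ n * K) QU (Qu n) (UB n) t). pose proof (UB (S n) t).
    simpl in H0.
    assert (0 <= q ^ n * K) by (apply Rmult_le_pos; auto; apply pow_le; lra).
    nra. }
  set (h := fun t => k t - g (U t)).
  assert (hc : forall t, continuous h t).
  { intro t. apply cont_sub; auto. apply cont_comp; auto. apply (ex_derive_continuous g), Hg. }
  destruct (S_C2 T h hc) as [C2 D2].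
  destruct (FF_Q T k g U HT Hg go Hk ko kp QU) as [_ [Fo Fp]].
  exists (FF T k g U). split.
  - split; [exact C2|]. split; [exact Fo|]. split; [exact Fp|].
    intro t. unfold FF. fold h. rewrite D2. unfold h. rewrite <- (Fix t). unfold FF. ring.
  - intros v [[v1 [v2 v3]] [vo [vp ve]]].
    assert (Hv : forall t, v t = FF T k g v t).
    { intro t. unfold FF.
      assert (E : Derive_n v 2 = fun t => k t - g (v t)).
      { apply functional_extensionality. intro x. specialize (ve x). lra. }
      rewrite <- E. apply repr; auto.
      - intro x. apply Derive_correct, v1.
      - intro x. apply Derive_correct, v2. }
    assert (Qv : QQ T v).
    { split; [|split]; auto. intro t. apply (ex_derive_continuous v), v1. }
    destruct (Ext v U Qv QU) as [D HD].
    assert (D0 : 0 <= D) by (pose proof (HD 0); pose proof (Rabs_pos (v 0 - U 0)); lra).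
    assert (All : forall n t, Rabs (v t - U t) <= q ^ n * D).
    { induction n; intro t. simpl; rewrite Rmult_1_l; auto.
      rewrite Hv, <- Fix. replace (q ^ S n * D) with (q * (q ^ n * D)) by (simpl; ring).
      apply Fd; auto. }
    apply functional_extensionality. intro t.
    rewrite Fix. assert (v t - U t = 0); [|lra].
    apply (small_zero q D); auto.
Qed.
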